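(* Let $\Sigma$ be a finite alphabet, $\lambda\in[0,1)$, and let $L=\mathcal{L}^{>\lambda}(\mathcal{A}|\mathrm{ND})$ for some quantum automaton $\mathcal{A}$ over $\Sigma$. Then: (1) For any $w\in\Sigma^+$, $u\in\Sigma^*$ and $v\in\Sigma^\omega$, if $uv\in L$ then there are infinitely many positive integers $k$ such that $uw^kv\in L$. (2) For any $v\in L$, there are infinitely many finite prefixes $v_n$ of $v$ such that $v_nw^\omega\in L$ for all $w\in\Sigma^+$.
   Context: A quantum automaton is a tuple $\mathcal{A}=(\mathcal{H},|s_0\rangle,\Sigma,\{U_\sigma:\sigma\in\Sigma\},F)$ where $\mathcal{H}$ is a finite-dimensional complex Hilbert space, $|s_0\rangle$ a unit vector, $\Sigma$ a finite alphabet, each $U_\sigma$ unitary on $\mathcal{H}$, and $F$ a subspace of $\mathcal{H}$. For a finite word $x=\sigma_1\cdots\sigma_m$, $U_x=U_{\sigma_m}\cdots U_{\sigma_1}$. For $w\in\Sigma^\omega$ with prefixes $w_n$ of length $n$, the non-disturbing run is $|s_n\rangle=U_{w_n}|s_0\rangle$ and $$f^{\mathrm{ND}}_{\mathcal{A}}(w)=\sup_{|\psi\rangle\in F,\ \||\psi\rangle\|=1}\sup_{\{n_i\}}\inf_{i\ge1}|\langle\psi|s_{n_i}\rangle|^2,$$ over strictly increasing sequences $0\le n_1<n_2<\cdots$. $\mathcal{L}^{>\lambda}(\mathcal{A}|\mathrm{ND})=\{w\in\Sigma^\omega: f^{\mathrm{ND}}_{\mathcal{A}}(w)>\lambda\}$.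 $w^\omega$ denotes the infinite repetition of $w$. *)

(* Defs.v *)
From HB Require Import structures.
From mathcomp Require Import all_boot all_order all_algebra.
From mathcomp Require Import all_classical all_reals.
From mathcomp Require Import complex.
Set Implicit Arguments. Unset Strict Implicit. Unset Printing Implicit Defensive.
Import Order.TTheory GRing.Theory Num.Theory.
Local Open Scope ring_scope.
Local Open Scope classical_set_scope.

Definition sqmod (R : realType) (z : R[i]) : R := complex.Re z ^+ 2 + complex.Im z ^+ 2.

Definition braket (R : realType) (d : nat) (psi s : 'cV[R[i]]_d) : R[i] :=
  \sum_(j < d) (conjc (psi j 0)) * s j 0.

Definition sqnorm (R : realType) (d : nat) (x : 'cV[R[i]]_d) : R :=
  \sum_(j < d) sqmod (x j 0).

Definition adjmx (R : realType) (d : nat) (U : 'M[R[i]]_d) : 'M[R[i]]_d :=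
  (map_mx (@conjc R) U)^T.
Definition unitary (R : realType) (d : nat) (U : 'M[R[i]]_d) : Prop :=
  adjmx U *m U = 1%:M.

(* A quantum automaton (H = C^d, |s0>, Sigma, {U_sigma}, F).  The subspace F
   is the row space of a matrix; membership of a column vector psi in F is
   (psi^T <= FM)%MS. *)
Record qaut (R : realType) (Sigma : finType) (d : nat) := QAut {
  qa_s0 : 'cV[R[i]]_d;
  qa_U : Sigma -> 'M[R[i]]_d;
  qa_F : 'M[R[i]]_d
}.

Definition wf_qaut (R : realType) (Sigma : finType) (d : nat)
  (A : qaut R Sigma d) : Prop :=
  sqnorm (qa_s0 A) = 1 /\ forall a : Sigma, unitary (qa_U A a).

Definition inF (R : realType) (Sigma : finType) (d : nat)
  (A : qaut R Sigma d) (psi : 'cV[R[i]]_d) : bool :=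
  (psi^T <= qa_F A)%MS.

Definition oword (Sigma : Type) := nat -> Sigma.

(* Non-disturbing run: s_0 = s0, s_{n+1} = U_{w(n)} s_n, so that
   s_n = U_{w_n} s0 with U_{s1...sm} = U_{sm} ... U_{s1}. *)
Fixpoint run (R : realType) (Sigma : finType) (d : nat)
  (A : qaut R Sigma d) (w : oword Sigma) (n : nat) : 'cV[R[i]]_d :=
  match n with
  | 0 => qa_s0 A
  | n'.+1 => qa_U A (w n') *m run A w n'
  end.

Definition fND (R : realType) (Sigma : finType) (d : nat)
  (A : qaut R Sigma d) (w : oword Sigma) : R :=
  sup [set r : R | exists psi : 'cV[R[i]]_d,
        [/\ inF A psi, sqnorm psi = 1 &
         exists nseq : nat -> nat,
           (forall i, (nseq i < nseq i.+1)%N) /\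
           r = inf [set sqmod (braket psi (run A w (nseq i))) | i in [set: nat]]]].

Definition LND (R : realType) (Sigma : finType) (d : nat)
  (A : qaut R Sigma d) (lambda : R) : set (oword Sigma) :=
  [set w | lambda < fND A w].

Definition catw (Sigma : Type) (u : seq Sigma) (v : oword Sigma) : oword Sigma :=
  fun n => if (n < size u)%N then nth (v 0%N) u n else v (n - size u)%N.

Definition wpow (Sigma : Type) (w : seq Sigma) (k : nat) : seq Sigma :=
  flatten (nseq k w).

(* w^omega for the nonempty finite word x :: w'. *)
Definition womega (Sigma : Type) (x : Sigma) (w' : seq Sigma) : oword Sigma :=
  fun n => nth x (x :: w') (n %% (size w').+1).

Definition wprefix (Sigma : Type) (v : oword Sigma) (n : nat) : seq Sigma :=
  mkseq v n.

(* Main.v *)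
Require Import Defs.
From HB Require Import structures.
From mathcomp Require Import all_boot all_order all_algebra.
From mathcomp Require Import all_classical all_reals.
From mathcomp Require Import complex.
From mathcomp Require Import ring lra zify.
Import Order.TTheory GRing.Theory Num.Theory.
Local Open Scope ring_scope.
Local Open Scope classical_set_scope.
Set Implicit Arguments. Unset Strict Implicit. Unset Printing Implicit Defensive.


Section Cx.
Variable R : realType.
Implicit Types x y : R[i].

Lemma ReD x y : complex.Re (x + y) = complex.Re x + complex.Re y.
Proof. by case: x; case: y. Qed.
Lemma ImD x y : complex.Im (x + y) = complex.Im x + complex.Im y.
Proof. by case: x; case: y. Qed.
Lemma ReN x : complex.Re (- x) = - complex.Re x.
Proof. by case: x. Qed.
Lemma ImN x : complex.Im (- x) = - complex.Im x.
Proof. by case: x. Qed.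
Lemma ReM x y : complex.Re (x * y) = complex.Re x * complex.Re y - complex.Im x * complex.Im y.
Proof. by case: x; case: y. Qed.
Lemma ImM x y : complex.Im (x * y) = complex.Re x * complex.Im y + complex.Im x * complex.Re y.
Proof. by case: x => a b; case: y => c e /=. Qed.
Lemma ReJ x : complex.Re (conjc x) = complex.Re x.
Proof. by case: x. Qed.
Lemma ImJ x : complex.Im (conjc x) = - complex.Im x.
Proof. by case: x. Qed.
Lemma Re0 : complex.Re (0 : R[i]) = 0. Proof. by []. Qed.
Lemma Im0 : complex.Im (0 : R[i]) = 0. Proof. by []. Qed.

Lemma sqmod_ge0 x : 0 <= sqmod x.
Proof. by rewrite /sqmod addr_ge0 // sqr_ge0. Qed.

Lemma sqmodM x y : sqmod (x * y) = sqmod x * sqmod y.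
Proof. rewrite /sqmod ReM ImM; ring. Qed.

Lemma sqmodJ x : sqmod (conjc x) = sqmod x.
Proof. by rewrite /sqmod ReJ ImJ sqrrN. Qed.

Lemma ReJM x : complex.Re (conjc x * x) = sqmod x.
Proof. rewrite ReM ReJ ImJ /sqmod; ring. Qed.

Lemma Re_sum (I : Type) (r : seq I) (F : I -> R[i]) :
  complex.Re (\sum_(i <- r) F i) = \sum_(i <- r) complex.Re (F i).
Proof. by elim: r => [|a r IH]; rewrite ?big_nil ?big_cons // ReD IH. Qed.

End Cx.


Section Vec.
Variable R : realType.

Lemma sqmod_sum_le (I : Type) (r : seq I) (F : I -> R[i]) :
  sqmod (\sum_(i <- r) F i) <= (\sum_(i <- r) (1:R)) * \sum_(i <- r) sqmod (F i).
Proof.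
elim: r => [|a r IH]; first by rewrite !big_nil /sqmod /= expr0n /= addr0 mul0r.
rewrite !big_cons.
set S := \sum_(i <- r) F i in IH *.
set n := \sum_(i <- r) (1:R) in IH *.
set Q := \sum_(i <- r) sqmod (F i) in IH *.
have Q0 : 0 <= Q by rewrite /Q sumr_ge0 // => i _; exact: sqmod_ge0.
have n0 : 0 <= n by rewrite /n sumr_ge0.
move: IH; rewrite /sqmod ReD ImD.
set a1 := complex.Re (F a); set a2 := complex.Im (F a).
set s1 := complex.Re S; set s2 := complex.Im S => IH.
have key : n * (2 * (a1 * s1 + a2 * s2)) <= n * (n * (a1^+2 + a2^+2) + Q).
  have h1 : 0 <= (n * a1 - s1)^+2 + (n * a2 - s2)^+2 by rewrite addr_ge0 // sqr_ge0.
  nra.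
have [n_eq0|n_gt0] := eqVneq n 0.
  have : s1^+2 + s2^+2 <= 0 by move: IH; rewrite n_eq0 mul0r.
  move=> hs; have hs1 : s1 = 0 by nra.
  have hs2 : s2 = 0 by nra.
  rewrite hs1 hs2 n_eq0; nra.
have np : 0 < n by rewrite lt0r n_gt0.
have key2 : 2 * (a1 * s1 + a2 * s2) <= n * (a1^+2 + a2^+2) + Q.
  by rewrite -(ler_pM2l np).
nra.
Qed.

Lemma sqmod_le_sqnorm d (x : 'cV[R[i]]_d) j : sqmod (x j 0) <= sqnorm x.
Proof.
rewrite /sqnorm (bigD1 j) //= lerDl sumr_ge0 // => i _; exact: sqmod_ge0.
Qed.

Lemma sqnorm_ge0 d (x : 'cV[R[i]]_d) : 0 <= sqnorm x.
Proof. by rewrite /sqnorm sumr_ge0 // => i _; exact: sqmod_ge0. Qed.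

Lemma braket_bound d (psi e : 'cV[R[i]]_d) :
  (forall j, sqmod (psi j 0) <= 1) ->
  sqmod (braket psi e) <= d%:R * sqnorm e.
Proof.
move=> hpsi; rewrite /braket.
apply: le_trans; first exact: sqmod_sum_le.
have -> : \sum_(i < d) (1:R) = d%:R by rewrite sumr_const card_ord.
rewrite ler_wpM2l // /sqnorm ler_sum // => i _.
rewrite sqmodM sqmodJ -[X in _ <= X]mul1r ler_wpM2r //; exact: sqmod_ge0.
Qed.

Lemma braketD d (psi y e : 'cV[R[i]]_d) :
  braket psi (y + e) = braket psi y + braket psi e.
Proof. by rewrite /braket -big_split; apply: eq_bigr => i _; rewrite mxE mulrDr. Qed.

Lemma sqnorm_mx d (x : 'cV[R[i]]_d) :
  sqnorm x = complex.Re (((map_mx conjc x)^T *m x) 0 0).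
Proof.
rewrite mxE Re_sum /sqnorm; apply: eq_bigr => j _.
by rewrite !mxE ReJM.
Qed.

Lemma sqnorm_unitary d (U : 'M[R[i]]_d) (x : 'cV[R[i]]_d) :
  unitary U -> sqnorm (U *m x) = sqnorm x.
Proof.
move=> hU; rewrite !sqnorm_mx map_mxM trmx_mul -mulmxA (mulmxA _ U).
by move: hU; rewrite /unitary /adjmx => ->; rewrite mul1mx.
Qed.

Lemma sqmod_pert (a b : R[i]) (K eta : R) :
  1 <= K -> 0 <= eta -> sqmod a <= K -> sqmod b <= eta ^+ 2 ->
  sqmod a - 4 * K * eta <= sqmod (a + b).
Proof.
rewrite /sqmod ReD ImD.
move: (complex.Re a) (complex.Im a) (complex.Re b) (complex.Im b) => a1 a2 b1 b2.
move=> K1 e0 ha hb.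
have ha1 : a1 <= K by nra.
have ha1' : - K <= a1 by nra.
have ha2 : a2 <= K by nra.
have ha2' : - K <= a2 by nra.
have hb1 : b1 <= eta by nra.
have hb1' : - eta <= b1 by nra.
have hb2 : b2 <= eta by nra.
have hb2' : - eta <= b2 by nra.
have p1 : - (K * eta) <= a1 * b1 by nra.
have p2 : - (K * eta) <= a2 * b2 by nra.
nra.
Qed.

End Vec.


Section Runs.
Variables (R : realType) (Sigma : finType) (d : nat).
Variable U : Sigma -> 'M[R[i]]_d.
Hypothesis hU : forall a, unitary (U a).

Fixpoint runf (x : 'cV[R[i]]_d) (w : oword Sigma) n :=
  match n with 0 => x | n'.+1 => U (w n') *m runf x w n' end.

Fixpoint runs (x : 'cV[R[i]]_d) (p : seq Sigma) :=
  match p with [::] => x | a :: p' => runs (U a *m x) p' end.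

Lemma runf_add x w a n :
  runf x w (a + n) = runf (runf x w a) (fun i => w (a + i)%N) n.
Proof. by elim: n => [|n IH] /=; rewrite ?addn0 // addnS /= IH. Qed.

Lemma runfD x e w n : runf (x + e) w n = runf x w n + runf e w n.
Proof. by elim: n => [|n IH] //=; rewrite IH mulmxDr. Qed.

Lemma runfB x e w n : runf (x - e) w n = runf x w n - runf e w n.
Proof. by elim: n => [|n IH] //=; rewrite IH mulmxBr. Qed.

Lemma runf_norm x w n : sqnorm (runf x w n) = sqnorm x.
Proof. by elim: n => [|n IH] //=; rewrite sqnorm_unitary. Qed.

Lemma runf_cat x p v n :
  runf x (catw p v) (size p + n) = runf (runs x p) v n.
Proof.
elim: p x => [|a p IH] x.
  rewrite /= add0n; congr runf; apply: funext => i; by rewrite /catw /= subn0.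
have -> : (size (a :: p) + n = 1 + (size p + n))%N by rewrite add1n addSn.
rewrite runf_add /=.
rewrite -[X in runf _ X _ = _](_ : catw p v = _) ?IH //.
Qed.

Lemma runf_ext x w w' n : (forall i, (i < n)%N -> w i = w' i) -> runf x w n = runf x w' n.
Proof. by elim: n => [|n IH] h //=; rewrite h // IH // => i hi; apply: h; exact: ltnW. Qed.

Lemma runs_cat x p q : runs x (p ++ q) = runs (runs x p) q.
Proof. by elim: p x => [|a p IH] x //=. Qed.

Lemma runsD x e p : runs (x + e) p = runs x p + runs e p.
Proof. by elim: p x e => [|a p IH] x e //=; rewrite mulmxDr IH. Qed.

Lemma runsB x e p : runs (x - e) p = runs x p - runs e p.
Proof. by elim: p x e => [|a p IH] x e //=; rewrite mulmxBr IH. Qed.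

Lemma runs_norm x p : sqnorm (runs x p) = sqnorm x.
Proof. by elim: p x => [|a p IH] x //=; rewrite IH sqnorm_unitary. Qed.

Lemma runs_wpow x w k : runs x (wpow w k) = iter k (fun y => runs y w) x.
Proof.
elim: k x => [|k IH] x //=.
by rewrite /wpow /= runs_cat -/(wpow w k) IH -iterSr.
Qed.

End Runs.
Arguments runf {R Sigma d}.
Arguments runs {R Sigma d}.

Lemma run_runf (R : realType) (Sigma : finType) (d : nat) (A : qaut R Sigma d) w n :
  run A w n = runf (qa_U A) (qa_s0 A) w n.
Proof. by elim: n => [|n IH] //=; rewrite IH. Qed.


Section Recur.
Variables (R : realType) (d : nat).
Variable f : 'cV[R[i]]_d -> 'cV[R[i]]_d.
Hypothesis fB : forall a b, f (a - b) = f a - f b.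
Hypothesis fN : forall a, sqnorm (f a) = sqnorm a.

Lemma iterB n a b : iter n f (a - b) = iter n f a - iter n f b.
Proof. by elim: n => [|n IH] //=; rewrite IH fB. Qed.

Lemma iterN n a : sqnorm (iter n f a) = sqnorm a.
Proof. by elim: n => [|n IH] //=; rewrite fN. Qed.

Lemma trunc_close (p q : R) : 0 <= p -> 0 <= q -> Num.truncn p = Num.truncn q ->
  (p - q) ^+ 2 <= 1.
Proof.
move=> p0 q0 e.
have /andP[h1 h2] := truncn_itv p0.
have /andP[h3 h4] := truncn_itv q0.
rewrite e in h1 h2.
move: h1 h2 h3 h4; rewrite -natr1.
move: ((Num.truncn q)%:R : R) => n; nra.
Qed.

Lemma pigeon x (g : R) : sqnorm x = 1 -> 0 < g ->
  exists k l, (k < l)%N /\ sqnorm (iter l f x - iter k f x) <= g.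
Proof.
move=> hx g0.
pose D := 2 * d%:R + g.
have D0 : 0 < D by rewrite /D ltr_wpDl // mulr_ge0.
pose del := g / D.
have delD : del * D = g by rewrite /del mulfVK // gt_eqF.
have del0 : 0 < del by rewrite /del divr_gt0.
have del1 : del <= 1 by rewrite /del ler_pdivrMr // mul1r /D lerDr mulr_ge0.
have del2 : 2 * d%:R * del <= g.
  have : 0 <= del * g by rewrite mulr_ge0 // ltW.
  move: delD; rewrite /D; nra.
pose c (t : R) := Num.truncn ((t + 1) / del).
pose N := Num.truncn (2 / del).
have cN t : t ^+ 2 <= 1 -> (c t <= N)%N.
  move=> ht; apply: le_truncn; rewrite ler_pM2r ?invr_gt0 //; nra.
have cE t s : t ^+ 2 <= 1 -> s ^+ 2 <= 1 -> c t = c s -> (t - s) ^+ 2 <= del ^+ 2.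
  move=> ht hs e.
  have p0 : 0 <= (t + 1) / del by rewrite divr_ge0 ?(ltW del0) //; nra.
  have q0 : 0 <= (s + 1) / del by rewrite divr_ge0 ?(ltW del0) //; nra.
  have := trunc_close p0 q0 e.
  have -> : (t + 1) / del - (s + 1) / del = (t - s) / del by rewrite -mulrBl; congr (_ * _); ring.
  by rewrite expr_div_n ler_pdivrMr ?exprn_gt0 // mul1r.
pose y k := iter k f x.
have yN k : sqnorm (y k) = 1 by rewrite /y iterN.
have yRe k j : (complex.Re (y k j 0)) ^+ 2 <= 1.
  have := sqmod_le_sqnorm (y k) j; rewrite yN /sqmod.
  have := sqr_ge0 (complex.Im (y k j 0)); nra.
have yIm k j : (complex.Im (y k j 0)) ^+ 2 <= 1.
  have := sqmod_le_sqnorm (y k) j; rewrite yN /sqmod.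
  have := sqr_ge0 (complex.Re (y k j 0)); nra.
pose T := {ffun 'I_d -> 'I_N.+1 * 'I_N.+1}.
pose h (k : nat) : T := [ffun j => (inord (c (complex.Re (y k j 0))), inord (c (complex.Im (y k j 0))))].
pose F (i : 'I_#|T|.+1) := h i.
have : ~~ injectiveb F.
  apply/negP => /injectiveP inj; have := leq_card _ inj; by rewrite card_ord ltnn.
move=> /injectivePn [i [j nij Fij]].
suff main : forall i j : 'I_#|T|.+1, (i < j)%N -> F i = F j ->
   exists k l, (k < l)%N /\ sqnorm (iter l f x - iter k f x) <= g.
  case: (ltngtP i j) => [lt|gt|eq].
  - exact: main lt Fij.
  - exact: main gt (esym Fij).
  - by move/val_inj: eq => eq; rewrite eq eqxx in nij.
move=> {nij Fij} i0 j0 lij Fij; exists i0, j0; split => //.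
have ent : forall t, sqmod ((y j0 - y i0) t 0) <= 2 * del.
  move=> t.
  have := congr1 (fun fn : T => fn t) Fij; rewrite /F /h !ffunE => -[e1 e2].
  move/(congr1 (@nat_of_ord _)): e1; rewrite !inordK ?ltnS ?cN // => e1.
  move/(congr1 (@nat_of_ord _)): e2; rewrite !inordK ?ltnS ?cN // => e2.
  have := cE _ _ (yRe i0 t) (yRe j0 t) e1.
  have := cE _ _ (yIm i0 t) (yIm j0 t) e2.
  rewrite !mxE /sqmod ReD ImD ReN ImN.
  move: (complex.Re (y i0 t 0)) (complex.Re (y j0 t 0)) (complex.Im (y i0 t 0)) (complex.Im (y j0 t 0)) => a b a' b'.
  nra.
apply: le_trans (_ : \sum_(t < d) (2 * del) <= g).
  exact: ler_sum.
rewrite sumr_const card_ord -mulr_natr; nra.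
Qed.

End Recur.

Lemma recur (R : realType) (d : nat) (f : 'cV[R[i]]_d -> 'cV[R[i]]_d)
  (fB : forall a b, f (a - b) = f a - f b)
  (fN : forall a, sqnorm (f a) = sqnorm a) x (g : R) M :
  sqnorm x = 1 -> 0 < g ->
  exists m, (M < m)%N /\ sqnorm (iter m f x - x) <= g.
Proof.
move=> hx g0.
pose f' := iter M.+1 f.
have f'B a b : f' (a - b) = f' a - f' b by rewrite /f' iterB.
have f'N a : sqnorm (f' a) = sqnorm a by rewrite /f' iterN.
have [k [l [kl hkl]]] := pigeon f'N hx g0.
exists ((l - k) * M.+1)%N; split.
  rewrite mulnS; have : (0 < l - k)%N by rewrite subn_gt0.
  case: (l - k)%N => // n _; rewrite mulSn; lia.
rewrite iterM -/f'.
have e : iter l f' x - iter k f' x = iter k f' (iter (l - k) f' x - x).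
  by rewrite (iterB f'B) -iterD subnKC // ltnW.
by rewrite e (iterN f'N) in hkl.
Qed.


Section F.
Variables (R : realType) (Sigma : finType) (d : nat) (A : qaut R Sigma d).
Hypothesis wf : wf_qaut A.

Lemma run_norm w n : sqnorm (run A w n) = 1.
Proof. by case: wf => h1 h2; rewrite run_runf runf_norm. Qed.

Lemma value_bound (psi : 'cV[R[i]]_d) w n : sqnorm psi = 1 ->
  sqmod (braket psi (run A w n)) <= d%:R.
Proof.
move=> hpsi.
have hj : forall j, sqmod (psi j 0) <= 1 by move=> j; rewrite -hpsi sqmod_le_sqnorm.
by have := braket_bound (run A w n) hj; rewrite run_norm mulr1.
Qed.

Lemma LND_elim w (lambda : R) : 0 <= lambda -> lambda < fND A w ->
  exists psi ns c, [/\ inF A psi, sqnorm psi = 1, (forall i, (ns i < ns i.+1)%N),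
    lambda < c & forall i, c <= sqmod (braket psi (run A w (ns i)))].
Proof.
move=> l0; rewrite /fND.
set S := [set r : R | _].
case: (pselect (S !=set0)) => [S0|S0]; last first.
  have -> : S = set0.
    by apply/seteqP; split => r Sr //; exfalso; apply: S0; exists r.
  by rewrite sup0 => /(le_lt_trans l0); rewrite ltxx.
move=> /(sup_gt S0) [r [psi [hF hn [ns [hns ->]]]]] hl.
exists psi, ns, (inf [set sqmod (braket psi (run A w (ns i))) | i in [set: nat]]).
split => // i.
apply: ge_inf; last by exists i.
by exists 0 => _ [j _ <-]; exact: sqmod_ge0.
Qed.

Lemma LND_intro w psi ns (c : R) : inF A psi -> sqnorm psi = 1 ->
  (forall i, (ns i < ns i.+1)%N) ->
  (forall i, c <= sqmod (braket psi (run A w (ns i)))) -> c <= fND A w.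
Proof.
move=> hF hn hns hc; rewrite /fND.
set V := [set sqmod (braket psi (run A w (ns i))) | i in [set: nat]].
have cV : c <= inf V.
  apply: lb_le_inf; first by exists (sqmod (braket psi (run A w (ns 0)))), 0.
  by move=> _ [j _ <-].
apply: (le_trans cV); apply: ub_le_sup.
  exists d%:R => _ [psi' [_ hn' [ns' [_ ->]]]].
  set V' := [set _ | i in _].
  apply: le_trans (value_bound w (ns' 0) hn').
  apply: ge_inf; last by exists 0.
  by exists 0 => _ [j _ <-]; exact: sqmod_ge0.
by exists psi; split => //; exists ns.
Qed.

End F.


Lemma unbounded_seq (P : nat -> Prop) : (forall M, exists k, (M < k)%N /\ P k) ->
  exists g : nat -> nat, (forall i, (g i < g i.+1)%N) /\ (forall i, P (g i)).
Proof.
move=> H.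
pose nx M := proj1_sig (cid (H M)).
have nxP M : (M < nx M)%N /\ P (nx M) := proj2_sig (cid (H M)).
exists (fun i => iter i.+1 nx 0%N); split => i.
  exact: (nxP _).1.
exact: (nxP _).2.
Qed.

Lemma unbounded_infinite (P : set nat) : (forall M, exists k, (M < k)%N /\ P k) -> infinite_set P.
Proof.
move=> /unbounded_seq [g [gi gP]].
apply/infiniteP/pcard_leP/injfunPex; exists g => //.
move=> i j _ _ e.
have mono := homo_ltn ltn_trans gi.
case: (ltngtP i j) => // h; have := mono _ _ h; by rewrite e ltnn.
Qed.

Lemma incr_ge (ns : nat -> nat) : (forall i, (ns i < ns i.+1)%N) -> forall i, (i <= ns i)%N.
Proof. move=> h; elim => [|i IH] //; exact: leq_ltn_trans IH (h i). Qed.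

Lemma d_pos (R : realType) d (x : 'cV[R[i]]_d) : sqnorm x = 1 -> (0 < d)%N.
Proof. by case: d x => // x; rewrite /sqnorm big_ord0 => /eqP; rewrite eq_sym oner_eq0. Qed.

Lemma pert (R : realType) d (psi y e : 'cV[R[i]]_d) (eta : R) :
  (0 < d)%N -> 0 <= eta -> sqnorm psi = 1 -> sqnorm y = 1 ->
  sqnorm e <= eta ^+ 2 / d%:R ->
  sqmod (braket psi y) - 4 * d%:R * eta <= sqmod (braket psi (y + e)).
Proof.
move=> d0 e0 hpsi hy he.
have hj : forall j, sqmod (psi j 0) <= 1 by move=> j; rewrite -hpsi sqmod_le_sqnorm.
rewrite braketD; apply: sqmod_pert => //.
- by rewrite ler1n.
- by have := braket_bound y hj; rewrite hy mulr1.
- apply: le_trans (braket_bound e hj) _.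
  have dp : 0 < (d%:R : R) by rewrite ltr0n.
  rewrite -ler_pdivlMl //. by rewrite mulrC.
Qed.

Lemma size_wpow (T : Type) (w : seq T) k : size (wpow w k) = (k * size w)%N.
Proof. by elim: k => [|k IH] //; rewrite /wpow /= size_cat -/(wpow w k) IH mulSn. Qed.

Lemma runs_prefix (R : realType) (Sigma : finType) d (U : Sigma -> 'M[R[i]]_d) x v n :
  runs U x (wprefix v n) = runf U x v n.
Proof.
have := runf_cat U x (wprefix v n) v 0; rewrite addn0 /= size_mkseq => <-.
by apply: runf_ext => i hi; rewrite /catw size_mkseq hi nth_mkseq.
Qed.

Lemma womega_cat (Sigma : Type) (x0 : Sigma) w' :
  womega x0 w' = catw (x0 :: w') (womega x0 w').
Proof.
apply: funext => i; rewrite /catw /womega.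
case: ifP => h.
  by rewrite modn_small //; apply: set_nth_default.
have h' : (size (x0 :: w') <= i)%N by rewrite leqNgt h.
by rewrite -{1}(subnK h') modnDr.
Qed.

Lemma runf_womega (R : realType) (Sigma : finType) d (U : Sigma -> 'M[R[i]]_d) y x0 w' j :
  runf U y (womega x0 w') (j * size (x0 :: w')) =
  iter j (fun z => runs U z (x0 :: w')) y.
Proof.
elim: j y => [|j IH] y //.
rewrite mulSn {1}womega_cat runf_cat IH iterSr //.
Qed.

Unset Implicit Arguments.
Theorem theorem2 (R : realType) (Sigma : finType) (d : nat)
  (A : qaut R Sigma d) (lambda : R) :
  wf_qaut A -> 0 <= lambda -> lambda < 1 ->
  (* (1) *)
  (forall (w : seq Sigma) (u : seq Sigma) (v : oword Sigma),
     w != [::] ->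
     LND A lambda (catw u v) ->
     infinite_set [set k : nat | (0 < k)%N /\
                                 LND A lambda (catw (u ++ wpow w k) v)]) /\
  (* (2) *)
  (forall v : oword Sigma,
     LND A lambda v ->
     infinite_set [set n : nat | forall (x : Sigma) (w' : seq Sigma),
                                 LND A lambda (catw (wprefix v n) (womega x w'))]).
Proof.
move=> wf l0 l1; have [hs0 hU] := wf.
have d0 := d_pos hs0.
have dR0 : 0 < (d%:R : R) by rewrite ltr0n.
have key : forall (c : R), lambda < c -> exists eta : R, exists gam : R,
   [/\ 0 <= eta, 0 < gam, gam = eta ^+ 2 / d%:R & lambda < c - 4 * d%:R * eta].
  move=> c lc; exists ((c - lambda) / (8 * d%:R)), (((c - lambda) / (8 * d%:R)) ^+ 2 / d%:R).
  have e0 : 0 < (c - lambda) / (8 * d%:R) by rewrite divr_gt0 ?subr_gt0 // mulr_gt0.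
  split => //; first exact: ltW.
    by rewrite divr_gt0 // exprn_gt0.
  have -> : 4 * d%:R * ((c - lambda) / (8 * d%:R)) = (c - lambda) / 2.
    by field; rewrite gt_eqF.
  lra.
split.
- move=> w u v hw hL.
  have [psi [ns [c [hF hn hns hlc hc]]]] := LND_elim l0 hL.
  have [eta [gam [eta0 gam0 gamE hlam]]] := key c hlc.
  pose f := fun y => runs (qa_U A) y w.
  have fB a b : f (a - b) = f a - f b by rewrite /f runsB.
  have fN a : sqnorm (f a) = sqnorm a by rewrite /f runs_norm.
  pose x := runs (qa_U A) (qa_s0 A) u.
  have hx : sqnorm x = 1 by rewrite /x runs_norm.
  apply: unbounded_infinite => M.
  have [m [Mm hm]] := recur fB fN M hx gam0.
  exists m; split => //; split; first by lia.
  rewrite /LND /=.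
  apply: (lt_le_trans hlam).
  pose ns' i := (size u + m * size w + (ns (i + size u)%N - size u))%N.
  have hge := incr_ge hns.
  apply: (LND_intro wf hF hn (ns := ns')).
    move=> i; rewrite /ns'.
    have := hns (i + size u)%N; have := hge (i + size u)%N.
    rewrite addSn; lia.
  move=> i; rewrite /ns'.
  have -> : run A (catw (u ++ wpow w m) v) (size u + m * size w + (ns (i + size u)%N - size u)) =
            runf (qa_U A) (iter m f x) v (ns (i + size u)%N - size u).
    rewrite run_runf -(size_wpow w m) -size_cat runf_cat runs_cat runs_wpow //.
  have := hc (i + size u)%N.
  have -> : run A (catw u v) (ns (i + size u)%N) =
            runf (qa_U A) x v (ns (i + size u)%N - size u).
    rewrite run_runf -runf_cat subnKC //.
    by have := hge (i + size u)%N; lia.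
  move=> hci.
  have -> : iter m f x = x + (iter m f x - x) by rewrite addrC subrK.
  rewrite runfD.
  apply: le_trans (pert d0 eta0 hn _ _); first by rewrite lerD2r.
    by rewrite runf_norm.
  by rewrite runf_norm //; move: hm; rewrite gamE.
- move=> v hL.
  have [psi [ns [c [hF hn hns hlc hc]]]] := LND_elim l0 hL.
  have [eta [gam [eta0 gam0 gamE hlam]]] := key c hlc.
  have hge := incr_ge hns.
  apply: unbounded_infinite => M.
  exists (ns M.+1); split; first by have := hge M.+1; lia.
  move=> x0 w'.
  pose q := x0 :: w'.
  pose f := fun y => runs (qa_U A) y q.
  have fB a b : f (a - b) = f a - f b by rewrite /f runsB.
  have fN a : sqnorm (f a) = sqnorm a by rewrite /f runs_norm.
  pose y0 := run A v (ns M.+1).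
  have hy0 : sqnorm y0 = 1 by rewrite /y0 run_norm.
  have [g [gi gP]] := unbounded_seq (fun N => recur fB fN N hy0 gam0).
  rewrite /LND /=.
  apply: (lt_le_trans hlam).
  pose ns' i := (ns M.+1 + g i * size q)%N.
  apply: (LND_intro wf hF hn (ns := ns')).
    move=> i; rewrite /ns' ltn_add2l ltn_pmul2r //; exact: gi.
  move=> i; rewrite /ns'.
  have -> : run A (catw (wprefix v (ns M.+1)) (womega x0 w')) (ns M.+1 + g i * size q)%N =
            iter (g i) f y0.
    have := runf_cat (qa_U A) (qa_s0 A) (wprefix v (ns M.+1)) (womega x0 w') (g i * size q).
    rewrite size_mkseq run_runf => ->; rewrite runs_prefix runf_womega.
    by rewrite /y0 run_runf.
  have := hc M.+1; rewrite -/y0 => hci.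
  have -> : iter (g i) f y0 = y0 + (iter (g i) f y0 - y0) by rewrite addrC subrK.
  apply: le_trans (pert d0 eta0 hn hy0 _); first by rewrite lerD2r.
  by rewrite -gamE.
Qed.
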